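(* Let $(q_i,k_i,v_i)_{i=1}^n$ be vectors in $\mathbb{R}^d$, $A_{ij}=\exp(\langle q_i,k_j\rangle/\sqrt d)$, $V\in\mathbb{R}^{n\times d}$ with rows $v_i^\top$, $v_{\max}=\|V\|_{\max}$, $\tilde k_i=k_i/d^{1/4}$, $\tilde v_i=(v_i,v_{\max})\in\mathbb{R}^{d+1}$, $\tilde q_i=q_i/d^{1/4}$, and let $\mathcal{X}_{\mathrm{in}}=\{(\tilde k_i,\tilde v_i)\}_{i=1}^n$ with $\mathcal{X}_{\mathrm{out}}$ indexed by $I_{\mathrm{out}}\subseteq[n]$, $|I_{\mathrm{out}}|=n_{\mathrm{out}}\ge1$. Let $\hat A=\frac{n}{n_{\mathrm{out}}}(A_{ij}\mathbf{1}\{j\in I_{\mathrm{out}}\})_{i,j}$. Define the query points $z_{ij}:=(\tilde q_i,e_j^{d+1})$ for $i\in[n],j\in[d+1]$ ($e_j^{d+1}$ the $j$-th standard basis vector of $\mathbb{R}^{d+1}$), and the kernel $\mathbf{k}_{\mathrm{att}}((\tilde k,\tilde v),(\tilde k',\tilde v'))=\exp(\langle\tilde k,\tilde k'\rangle)\langle\tilde v,\tilde v'\rangle$. Then $$\max\Big(\frac1n\|(\hat A-A)V\|_{\max},\ \frac1n\|(\hat A-A)\mathbf{1}_n\|_\infty\|V\|_{\max}\Big)=\max_{i\in[n],\,j\in[d+1]}\Big|\sum_{l=1}^n\mathbf{k}_{\mathrm{att}}\big(z_{ij},(\tilde k_l,\tilde v_l)\big)\Big(\frac1n-\frac{\mathbf{1}\{l\in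 I_{\mathrm{out}}\}}{n_{\mathrm{out}}}\Big)\Big|.$$ Equivalently, with the universe $\mathcal{X}=\mathcal{X}'\cup\mathcal{X}_{\mathrm{in}}$ where $\mathcal{X}'=\{z_{ij}\}$ occupies the indices $\mathcal{I}=[n(d+1)]$, and $K_{\mathrm{att}}=\mathbf{k}_{\mathrm{att}}(\mathcal{X},\mathcal{X})$, the left-hand side equals the kernel max seminorm $\|K_{\mathrm{att}}(p_{\mathrm{in}}-q_{\mathrm{out}})\|_{\mathcal{I}}=\max_{i\in\mathcal{I}}|e_i^\top K_{\mathrm{att}}(p_{\mathrm{in}}-q_{\mathrm{out}})|$.
   Context: $\|M\|_{\max}$ is the largest absolute entry of a matrix, $\|\cdot\|_\infty$ the largest absolute entry of a vector. $p_{\mathrm{in}}$ and $q_{\mathrm{out}}$ are the uniform probability vectors on $\mathcal{X}_{\mathrm{in}}$ and $\mathcal{X}_{\mathrm{out}}$ within the universe $\mathcal{X}$ (zero on $\mathcal{X}'$). *)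

(* Defs.v *)
From HB Require Import structures.
From mathcomp Require Import all_boot all_order all_algebra.
From mathcomp Require Import reals sequences.
Set Implicit Arguments. Unset Strict Implicit. Unset Printing Implicit Defensive.
Import Order.TTheory GRing.Theory Num.Theory.
Local Open Scope ring_scope.

Section AttDefs.
Variable R : realType.

Definition dotr m (u w : 'rV[R]_m) : R := \sum_(i < m) u 0 i * w 0 i.

(* ||M||_max : largest absolute entry (0 for an empty matrix). *)
Definition mxmax m p (M : 'M[R]_(m, p)) : R :=
  \big[Num.max/0]_(i < m) \big[Num.max/0]_(j < p) `|M i j|.

Variables (n d : nat) (q k v : 'I_n -> 'rV[R]_d) (Iout : {set 'I_n}).

Definition nout : nat := #|Iout|.

Definition attA : 'M[R]_n :=
  \matrix_(i, j) expR (dotr (q i) (k j) / Num.sqrt (d%:R)).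

Definition attV : 'M[R]_(n, d) := \matrix_(i, j) v i 0 j.

Definition vmax : R := mxmax attV.

Definition attAhat : 'M[R]_n :=
  ((n%:R / (nout%:R)) : R) *: \matrix_(i, j) (attA i j * (j \in Iout)%:R).

Definition fourth_root_d : R := Num.sqrt (Num.sqrt (d%:R)).

Definition ktil (l : 'I_n) : 'rV[R]_d := fourth_root_d^-1 *: k l.
Definition qtil (i : 'I_n) : 'rV[R]_d := fourth_root_d^-1 *: q i.
Definition vtil (l : 'I_n) : 'rV[R]_(d + 1) := row_mx (v l) (const_mx vmax).

Definition ebasis (j : 'I_(d + 1)) : 'rV[R]_(d + 1) := delta_mx 0 j.

Definition zpt (i : 'I_n) (j : 'I_(d + 1)) : 'rV[R]_d * 'rV[R]_(d + 1) :=
  (qtil i, ebasis j).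

(* universe X = X' u X_in, X' = {z_ij} occupying the first n(d+1) indices *)
Definition Npts : nat := (n * (d + 1) + n)%N.

Definition Xpt (a : 'I_Npts) : 'rV[R]_d * 'rV[R]_(d + 1) :=
  match split a with
  | inl b => let p := enum_val (cast_ord (esym (mxvec_cast n (d + 1))) b) in
             zpt p.1 p.2
  | inr l => (ktil l, vtil l)
  end.

Definition p_in : 'cV[R]_Npts :=
  \col_a (match split a with inl _ => 0 | inr _ => 1 / n%:R end).
Definition q_out : 'cV[R]_Npts :=
  \col_a (match split a with inl _ => 0 | inr l => (l \in Iout)%:R / (nout%:R) end).

End AttDefs.

Definition katt (R : realType) (d : nat) (x y : 'rV[R]_d * 'rV[R]_(d + 1)) : R :=
  expR (dotr x.1 y.1) * dotr x.2 y.2.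

Definition Katt (R : realType) n d (q k v : 'I_n -> 'rV[R]_d) : 'M[R]_(Npts n d) :=
  \matrix_(a, b) katt (Xpt q k v a) (Xpt q k v b).

Definition kernel_seminorm (R : realType) N (K : 'M[R]_N) (x : 'cV[R]_N) (I : pred 'I_N) : R :=
  \big[Num.max/0]_(a < N | I a) `|((delta_mx a (0 : 'I_1))^T *m K *m x) 0 0|.

(* Main.v *)
Require Import Defs.
From HB Require Import structures.
From mathcomp Require Import all_boot all_order all_algebra.
From mathcomp Require Import reals sequences.
From mathcomp Require Import ring lra.
Import Order.TTheory GRing.Theory Num.Theory.
Local Open Scope ring_scope.

Lemma split_lsh m n (b : 'I_m) : split (lshift n b) = inl b.
Proof. exact: (unsplitK (inl b)). Qed.
Lemma split_rsh m n (b : 'I_n) : split (rshift m b) = inr b.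
Proof. exact: (unsplitK (inr b)). Qed.

Lemma bigmax_scale (R : realType) (I : Type) (r : seq I) (P : pred I) (F : I -> R) c :
  0 <= c -> c * \big[Num.max/0]_(i <- r | P i) F i = \big[Num.max/0]_(i <- r | P i) (c * F i).
Proof.
move=> c0; apply: (big_ind2 (fun a b => c * a = b)); first by rewrite mulr0.
move=> a1 a2 b1 b2 <- <-; rewrite maxr_pMr //.
by [].

Qed.

Lemma bigmax_ge0 (R : realType) (I : Type) (r : seq I) (P : pred I) (F : I -> R) :
  0 <= \big[Num.max/0]_(i <- r | P i) F i.
Proof. exact: bigmax_ge_id. Qed.

Lemma dotr_delta (R : realType) m (j : 'I_m) (w : 'rV[R]_m) :
  dotr (delta_mx 0 j) w = w 0 j.
Proof.
rewrite /dotr (bigD1 j) //= mxE !eqxx mul1r big1 ?addr0 // => i /negbTE Hi.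
by rewrite mxE Hi andbF mul0r.
Qed.

Lemma dotrZ (R : realType) m (a b : R) (u w : 'rV[R]_m) :
  dotr (a *: u) (b *: w) = a * b * dotr u w.
Proof.
rewrite /dotr mulr_sumr; apply: eq_bigr => i _; rewrite !mxE; ring.
Qed.

Lemma exp_term (R : realType) n d (q k : 'I_n -> 'rV[R]_d) i l :
  expR (dotr (qtil q i) (ktil k l)) = attA q k i l.
Proof.
rewrite /qtil /ktil dotrZ mxE; congr expR.
rewrite -invfM -expr2 /fourth_root_d sqr_sqrtr ?sqrtr_ge0 //.
by rewrite mulrC.
Qed.

Definition Sij (R : realType) n d (q k v : 'I_n -> 'rV[R]_d) (Iout : {set 'I_n}) i j :=
  \sum_(l < n) katt (zpt q i j) (ktil k l, vtil v l)
                 * (n%:R^-1 - (l \in Iout)%:R / (#|Iout|%:R)).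

Arguments Sij {R n d}.

Lemma vmax_ge0 (R : realType) n d (v : 'I_n -> 'rV[R]_d) : 0 <= vmax v.
Proof. exact: bigmax_ge0. Qed.

Lemma F1 (R : realType) n d (q k v : 'I_n -> 'rV[R]_d) (Iout : {set 'I_n}) (hout : (0 < #|Iout|)%N) i (j : 'I_d) :
  `| Sij q k v Iout i (lshift 1 j) | =
  n%:R^-1 * `|((attAhat q k Iout - attA q k) *m attV v) i j|.
Proof.
rewrite !mxE /Sij.
have -> : \sum_(l < n) katt (zpt q i (lshift 1 j)) (ktil k l, vtil v l)
    * (n%:R^-1 - (l \in Iout)%:R / #|Iout|%:R) =
  - n%:R^-1 * \sum_j0 (attAhat q k Iout - attA q k) i j0 * attV v j0 j.
  rewrite mulr_sumr; apply: eq_bigr => l _.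
  have hn : n%:R != 0 :> R by rewrite pnatr_eq0 -lt0n (leq_ltn_trans _ (ltn_ord l)).
  rewrite /katt /zpt /= exp_term /ebasis dotr_delta /vtil row_mxEl !mxE /nout.
  by field; rewrite hn andbT pnatr_eq0 -lt0n hout.
by rewrite mulNr normrN normrM ger0_norm // invr_ge0 ler0n.
Qed.

Lemma F2 (R : realType) n d (q k v : 'I_n -> 'rV[R]_d) (Iout : {set 'I_n}) (hout : (0 < #|Iout|)%N) i :
  `| Sij q k v Iout i (rshift d (0 : 'I_1)) | =
  n%:R^-1 * `|((attAhat q k Iout - attA q k) *m const_mx 1 : 'cV[R]_n) i 0| * vmax v.
Proof.
rewrite !mxE /Sij.
have -> : \sum_(l < n) katt (zpt q i (rshift d (0 : 'I_1))) (ktil k l, vtil v l)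
    * (n%:R^-1 - (l \in Iout)%:R / #|Iout|%:R) =
  (- n%:R^-1 * vmax v) * \sum_j0 (attAhat q k Iout - attA q k) i j0 * (const_mx 1 : 'cV[R]_n) j0 0.
  rewrite mulr_sumr; apply: eq_bigr => l _.
  have hn : n%:R != 0 :> R by rewrite pnatr_eq0 -lt0n (leq_ltn_trans _ (ltn_ord l)).
  rewrite /katt /zpt /= exp_term /ebasis dotr_delta /vtil row_mxEr !mxE /nout.
  by field; rewrite hn andbT pnatr_eq0 -lt0n hout.
have h1 : `|n%:R^-1| = n%:R^-1 :> R by rewrite ger0_norm // invr_ge0 ler0n.
have h2 : `|vmax v| = vmax v by rewrite ger0_norm // vmax_ge0.
by rewrite normrM mulNr normrN normrM h1 h2 mulrAC.
Qed.

Lemma KT (R : realType) n d (q k v : 'I_n -> 'rV[R]_d) (Iout : {set 'I_n}) (a : 'I_(Npts n d)) :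
  ((delta_mx a (0 : 'I_1))^T *m Katt q k v *m (@p_in R n d - @q_out R n d Iout)) 0 0 =
  \sum_(l < n) katt (Xpt q k v a) (ktil k l, vtil v l)
                 * (n%:R^-1 - (l \in Iout)%:R / (#|Iout|%:R)).
Proof.
rewrite trmx_delta -rowE mxE /Npts big_split_ord /= big1 ?add0r.
  apply: eq_bigr => l _.
  by rewrite !mxE split_rsh /Xpt split_rsh div1r.
by move=> b _; rewrite !mxE split_lsh subrr mulr0.
Qed.

Theorem lemmaF2 (R : realType) (n d : nat) (q k v : 'I_n -> 'rV[R]_d)
    (Iout : {set 'I_n}) (hout : (0 < #|Iout|)%N) :
  let A := attA q k in
  let Ah := attAhat q k Iout in
  let V := attV v in
  let LHS := Num.max (n%:R^-1 * mxmax ((Ah - A) *m V))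
                     (n%:R^-1 * mxmax ((Ah - A) *m const_mx 1 : 'cV[R]_n) * mxmax V) in
  LHS = \big[Num.max/0]_(i < n) \big[Num.max/0]_(j < d + 1)
          `| \sum_(l < n) katt (zpt q i j) (ktil k l, vtil v l)
                 * (n%:R^-1 - (l \in Iout)%:R / (#|Iout|%:R)) |
  /\
  LHS = kernel_seminorm (Katt q k v) (@p_in R n d - @q_out R n d Iout)
          (fun a : 'I_(Npts n d) => (a < n * (d + 1))%N).
Proof.
move=> A Ah V LHS.
have ni0 : 0 <= n%:R^-1 :> R by rewrite invr_ge0 ler0n.
have vm0 : 0 <= mxmax V by exact: bigmax_ge0.
have R0 : 0 <= \big[Num.max/0]_(i < n) \big[Num.max/0]_(j < d + 1) `|Sij q k v Iout i j|.
  exact: bigmax_ge0.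
have E1 : LHS = \big[Num.max/0]_(i < n) \big[Num.max/0]_(j < d + 1) `|Sij q k v Iout i j|.
  apply/le_anti/andP; split.
  - rewrite /LHS ge_max; apply/andP; split.
    + rewrite /mxmax bigmax_scale //; apply: bigmax_le => // i _.
      rewrite bigmax_scale //; apply: bigmax_le => // j _.
      rewrite -F1 //; apply: (bigmax_sup i) => //; exact: le_bigmax.
    + rewrite (mulrC _ (mxmax V)) mulrA [mxmax (_ *m const_mx 1)]/mxmax.
      rewrite bigmax_scale ?mulr_ge0 //; apply: bigmax_le => // i _.
      rewrite bigmax_scale ?mulr_ge0 //; apply: bigmax_le => // j _.
      rewrite (ord1 j).
      rewrite (_ : mxmax V * n%:R^-1 * _ = `|Sij q k v Iout i (rshift d (0 : 'I_1))|);
        last by rewrite F2 // [RHS]mulrC mulrA.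
      apply: (bigmax_sup i) => //; exact: le_bigmax.
  - have L0 : 0 <= LHS by rewrite /LHS le_max mulr_ge0 ?bigmax_ge0.
    apply: bigmax_le => // i _; apply: bigmax_le => // j _.
    case: (splitP j) => [j' Ej | j' Ej].
    + have -> : j = lshift 1 j' by apply: ord_inj.
      rewrite F1 //; apply: le_trans (_ : _ <= n%:R^-1 * mxmax ((Ah - A) *m V)) _.
        rewrite ler_wpM2l //; apply: (bigmax_sup i) => //; exact: le_bigmax.
      by rewrite /LHS le_max lexx.
    + have -> : j = rshift d j' by apply: ord_inj.
      rewrite (ord1 j') F2 //.
      apply: le_trans (_ : _ <= n%:R^-1 * mxmax ((Ah - A) *m const_mx 1 : 'cV[R]_n) * mxmax V) _.
        rewrite ler_wpM2r // ler_wpM2l //; apply: (bigmax_sup i) => //; exact: le_bigmax.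
      by rewrite /LHS le_max lexx orbT.
have E2 : kernel_seminorm (Katt q k v) (@p_in R n d - @q_out R n d Iout)
          (fun a : 'I_(Npts n d) => (a < n * (d + 1))%N) =
    \big[Num.max/0]_(i < n) \big[Num.max/0]_(j < d + 1) `|Sij q k v Iout i j|.
  apply/le_anti/andP; split.
  - apply: bigmax_le => [|a ha]; first exact: bigmax_ge0.
    rewrite KT; move: ha; rewrite /Npts in a *.
    case: (splitP a) => [b Eb | b Eb]; last first.
      have -> : a = rshift (n * (d + 1)) b by apply: ord_inj.
      by move=> /negP.
    have -> : a = lshift n b by apply: val_inj; exact: Eb.
    move=> _.
    rewrite /Xpt split_lsh.
    set p := enum_val _.
    apply: (bigmax_sup p.1) => //; exact: le_bigmax.
  - apply: bigmax_le => [|i _]; first exact: bigmax_ge0.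
    apply: bigmax_le => [|j _]; first exact: bigmax_ge0.
    pose b := cast_ord (mxvec_cast n (d+1)) (enum_rank (i, j)).
    apply: (bigmax_sup (lshift n b : 'I_(Npts n d))); first exact: (ltn_ord b).
    by rewrite KT /Xpt split_lsh cast_ordK enum_rankK.
split; first exact: E1.
by rewrite E2.
Qed.
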